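(* Assume the standing hypotheses (H), (L) and (g) below. Let $u\in W^{1,1}(0,T;X)$ and $x_0\in X$ with $x_0\in Z(g(0,u(0),u(0)-x_0))$, and let $\xi\in W^{1,1}(0,T;X)$ be a solution of the state-dependent sweeping process with input $u$ and initial condition $x_0$. Then $$|\dot\xi(t)|\le\frac1{1-\delta}\Big(\Big(1+\frac{\omega K_1}{c}\Big)|\dot u(t)|+\frac{K_1}{c}a(t)\Big)\quad\text{for a.e. }t\in(0,T).$$
   Context: $T>0$. $X$ is a real Hilbert space with inner product $\langle\cdot,\cdot\rangle$ and norm $|x|=\sqrt{\langle x,x\rangle}$; $W$ is a real Banach space with norm $|\cdot|_W$, dual $W'$ (norm $|\cdot|_{W'}$), duality pairing $\langle v,f\rangle_W$; $\mathcal L(X,W)$ bounded linear operators with operator norm. $G:X\times W\to[0,\infty)$ is locally Lipschitz and $Z(w):=\{x\in X: G(x,w)\le 1\}$; $\partial Z(w)$ its boundary, $\mathrm{dist}(x,S)=\inf_{s\in S}|x-s|$. Partial gradients: $\nabla_xG(x,w)\in X$ with $\langle\nabla_xG(x,w),y\rangle=\lim_{t\to0}\frac1t(G(x+ty,w)-G(x,w))$; $\nabla_wG(x,w)\in W'$ with $\langle v,\nabla_wG(x,w)\rangle_W=\lim_{t\to0}\frac1t(G(x,w+tv)-G(x,w))$. (H): $\nabla_xG(x,w)$ exists for all $(x,w)$; there are positive constants $\lambda,c,L$ and functions $\mu_1:W\times[0,\infty)\to[0,\infty)$, $\mu_2:[0,\infty)\to[0,\infty)$ with $\mu_1(w,0)=\mu_2(0)=0$,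 $\lim_{s\to\infty}\mu_1(w,s)=\lim_{s\to\infty}\mu_2(s)=\infty$ for every $w$, such that for all $x,y,z\in X$, $w,w'\in W$: (i) $G(x,w)=1\Rightarrow|\nabla_xG(x,w)|\ge c$; (ii) $|\nabla_xG(x,w)-\nabla_xG(y,w)|\le\mu_1(w,|x-y|)$ if $x,y\in Z(w)$; (iii) $\langle\nabla_xG(x,w)-\nabla_xG(z,w),x-z\rangle\ge-\lambda|x-z|^2$ if $x\in\partial Z(w)$, $z\in Z(w)$; (iv) $|G(x,w)-G(x,w')|\le L|w-w'|_W$; (v) for $\rho>0$, $\mathrm{dist}(x,Z(w))\ge\rho\Rightarrow G(x,w)-1\ge\mu_2(\rho)$. Set $r:=c/\lambda$. (L): $\nabla_xG,\nabla_wG$ exist on $X\times W$; positive constants $K_0,K_1,C_0,C_1$ with $|\nabla_xG|\le K_0$, $|\nabla_wG|_{W'}\le K_1$, $|\nabla_xG(x,w)-\nabla_xG(x',w')|\le C_0(|x-x'|+|w-w'|_W)$, $|\nabla_wG(x,w)-\nabla_wG(x',w')|_{W'}\le C_1(|x-x'|+|w-w'|_W)$. (g): $g:[0,T]\times X\times X\to W$ continuous with partial derivatives $\partial_tg,\partial_ug,\partial_\xi g$, and $a,b\in L^1(0,T)$, constants $\gamma,\omega,C_\xi,C_u>0$ such that for all $u,v,\xi,\eta\in X$, a.e. $t$: $|\partial_\xi g(t,u,\xi)|_{\mathcal L(X,W)}\le\gamma$, $|\partial_ug(t,u,\xi)|_{\mathcal L(X,W)}\le\omega$, $|\partial_tg(t,u,\xi)|_W\le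 a(t)$, $|\partial_\xi g(t,u,\xi)-\partial_\xi g(t,v,\eta)|_{\mathcal L(X,W)}\le C_\xi(|u-v|+|\xi-\eta|)$, $|\partial_ug(t,u,\xi)-\partial_ug(t,v,\eta)|_{\mathcal L(X,W)}\le C_u(|u-v|+|\xi-\eta|)$, $|\partial_tg(t,u,\xi)-\partial_tg(t,v,\eta)|_W\le b(t)(|u-v|+|\xi-\eta|)$; and $\delta:=K_1\gamma/c<1$. State-dependent sweeping process with input $u$ and initial condition $x_0$: $\xi\in W^{1,1}(0,T;X)$ such that, with $x:=u-\xi$: $x(t)\in Z(g(t,u(t),\xi(t)))$ for all $t\in[0,T]$; $\langle x(t)-z,\dot\xi(t)\rangle+\frac{|\dot\xi(t)|}{2r}|x(t)-z|^2\ge0$ for all $z\in Z(g(t,u(t),\xi(t)))$, a.e. $t$; $x(0)=x_0$. *)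

(* Defs.v *)
From HB Require Import structures.
From mathcomp Require Import all_boot all_order all_algebra.
From mathcomp Require Import all_classical all_reals all_analysis.
Set Implicit Arguments. Unset Strict Implicit. Unset Printing Implicit Defensive.
Import Order.TTheory GRing.Theory Num.Theory.
Import numFieldNormedType.Exports.
Local Open Scope classical_set_scope.
Local Open Scope ring_scope.

Section Defs.
Variable R : realType.

(* ip is an inner product on X inducing the norm of X (X is then a real
   Hilbert space when X is a completeNormedModType). *)
Definition inner_product (X : normedModType R) (ip : X -> X -> R) : Prop :=
  [/\ (forall x y, ip x y = ip y x),
      (forall (a : R) x y z, ip (a *: x + y) z = a * ip x z + ip y z)
    & (forall x, `|x| = Num.sqrt (ip x x))].

Definition bdry (T : topologicalType) (A : set T) : set T :=
  closure A `\` interior A.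

(* dist(x,S) = inf_{s in S} |x - s|, in the extended reals (+oo if S = set0) *)
Definition dist (X : normedModType R) (x : X) (S : set X) : \bar R :=
  ereal_inf [set (`|x - s|)%:E | s in S].

Definition Zset (X W : normedModType R) (G : X -> W -> R) (w : W) : set X :=
  [set x | G x w <= 1].

Definition locally_lipschitz (X W : normedModType R) (G : X -> W -> R) : Prop :=
  forall (x0 : X) (w0 : W), exists2 rho : R, 0 < rho & exists Lc : R,
    forall x x' w w', `|x - x0| < rho -> `|x' - x0| < rho ->
      `|w - w0| < rho -> `|w' - w0| < rho ->
      `|G x w - G x' w'| <= Lc * (`|x - x'| + `|w - w'|).

Definition abs_cont (V : normedModType R) (a b : R) (f : R -> V) : Prop :=
  forall e : R, 0 < e -> exists2 d : R, 0 < d &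
    forall (n : nat) (s t : 'I_n -> R),
      (forall i, a <= s i /\ s i <= t i /\ t i <= b) ->
      (forall i j, i != j -> t i <= s j \/ t j <= s i) ->
      \sum_(i < n) (t i - s i) < d ->
      \sum_(i < n) `|f (t i) - f (s i)| < e.

Definition W11 (V : normedModType R) (T : R) (f : R -> V) : Prop :=
  [/\ abs_cont 0 T f,
      (\forall t \ae (@lebesgue_measure R), `]0, T[%classic t -> derivable f (t : R) 1)
    & (@lebesgue_measure R).-integrable `]0, T[%classic
         (fun t => (`|derive1 f t|)%:E)].

(* Solution of the state-dependent sweeping process with input u and
   initial condition x0 (with x := u - xi). *)
Definition sweeping_solution (X W : normedModType R) (ip : X -> X -> R)
    (G : X -> W -> R) (g : R -> X -> X -> W) (r T : R) (u : R -> X) (x0 : X)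
    (xi : R -> X) : Prop :=
  [/\ W11 T xi,
      (forall t, 0 <= t <= T -> Zset G (g t (u t) (xi t)) (u t - xi t)),
      (\forall t \ae (@lebesgue_measure R), `]0, T[%classic t ->
          forall z, Zset G (g t (u t) (xi t)) z ->
            0 <= ip (u t - xi t - z) (derive1 xi t)
                 + `|derive1 xi t| / (2 * r) * `|u t - xi t - z| ^+ 2)
    & u 0 - xi 0 = x0].

End Defs.

(* Main.v *)
Require Import Defs.
From HB Require Import structures.
From mathcomp Require Import all_boot all_order all_algebra.
From mathcomp Require Import all_classical all_reals all_analysis.
From mathcomp Require Import ring lra.
Import Order.TTheory GRing.Theory Num.Theory.
Import numFieldNormedType.Exports.
Local Open Scope classical_set_scope.
Local Open Scope ring_scope.


Set Implicit Arguments. Unset Strict Implicit.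

Section IP.
Variables (R : realType) (X : normedModType R) (ip : X -> X -> R).
Hypothesis hip : inner_product ip.

Lemma ipDl a b z : ip (a + b) z = ip a z + ip b z.
Proof. by have [_ h _] : _ := (hip : [/\ _, _ & _]); rewrite -{1}[a]scale1r h mul1r. Qed.
Lemma ip0l z : ip 0 z = 0.
Proof. by have := ipDl 0 0 z; rewrite addr0 => /eqP; rewrite -subr_eq subrr eq_sym => /eqP. Qed.
Lemma ipZl k a z : ip (k *: a) z = k * ip a z.
Proof. by have [_ h _] : _ := (hip : [/\ _, _ & _]); rewrite -[k *: a]addr0 h ip0l addr0. Qed.
Lemma ipC a b : ip a b = ip b a.
Proof. by have [h _ _] : _ := (hip : [/\ _, _ & _]). Qed.
Lemma ipDr a b z : ip z (a + b) = ip z a + ip z b.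
Proof. by rewrite ipC ipDl ipC (ipC b). Qed.
Lemma ipZr k a z : ip z (k *: a) = k * ip z a.
Proof. by rewrite ipC ipZl ipC. Qed.
Lemma ipNl a z : ip (- a) z = - ip a z.
Proof. by rewrite -scaleN1r ipZl mulN1r. Qed.
Lemma ipNr a z : ip z (- a) = - ip z a.
Proof. by rewrite ipC ipNl ipC. Qed.
Lemma ipBl a b z : ip (a - b) z = ip a z - ip b z.
Proof. by rewrite ipDl ipNl. Qed.
Lemma ipBr a b z : ip z (a - b) = ip z a - ip z b.
Proof. by rewrite ipDr ipNr. Qed.

Lemma ipxx a : ip a a = `|a| ^+ 2.
Proof.
have [_ _ hn] : _ := (hip : [/\ _, _ & _]); rewrite hn.
have [h|h] := leP 0 (ip a a); first by rewrite sqr_sqrtr.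
have : `|a| = 0 by rewrite hn; apply/eqP; rewrite sqrtr_eq0 ltW.
by move/normr0_eq0 => a0; move: h; rewrite a0 ip0l ltxx.
Qed.

Lemma ip_le a b : ip a b <= `|a| * `|b|.
Proof.
have e : `|a + b| ^+ 2 = `|a| ^+ 2 + 2 * ip a b + `|b| ^+ 2.
  by rewrite -!ipxx ipDl !ipDr (ipC b a); lra.
have h1 : `|a + b| ^+ 2 <= (`|a| + `|b|) ^+ 2.
  by rewrite lerXn2r ?nnegrE ?addr_ge0 // ler_normD.
nra.
Qed.

Lemma ip_abs a b : `|ip a b| <= `|a| * `|b|.
Proof.
rewrite ler_norml ip_le andbT.
by have := ip_le a (- b); rewrite ipNr normrN; lra.
Qed.
End IP.


Set Implicit Arguments. Unset Strict Implicit.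

Section Lim.
Variable R : realType.

Lemma quotE (V : normedModType R) (f : R -> V) t :
  (fun h : R => h^-1 *: ((f \o shift t) (h *: 1) - f t)) =
  (fun h => h^-1 *: (f (t + h) - f t)).
Proof. by apply/funext => h /=; rewrite /shift /= [h%:A]mulr1 (addrC h t). Qed.

Lemma quot_is_derive (V : normedModType R) (f : R -> V) t d :
  (fun h => h^-1 *: (f (t + h) - f t)) @ 0^' --> d -> is_derive t 1 f d.
Proof.
move=> hd; have dv : derivable f t 1 by rewrite /derivable quotE; apply/cvg_ex; exists d.
apply: DeriveDef => //; rewrite /derive quotE; exact: cvg_lim.
Qed.

Lemma derivable_quot (V : normedModType R) (f : R -> V) t :
  derivable f t 1 -> (fun h => h^-1 *: (f (t + h) - f t)) @ 0^' --> derive1 f t.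
Proof.
move=> dv; rewrite derive1E /derive -quotE; exact: dv.
Qed.

Lemma MVT01 (f df : R -> R) :
  (forall k, (fun h => (f (k + h) - f k) / h) @ 0^' --> df k) ->
  exists2 th, 0 <= th <= 1 & f 1 - f 0 = df th.
Proof.
move=> hd.
have hd' (k : R) : is_derive k (1 : R) f (df k).
  apply: quot_is_derive.
  have -> : (fun h => h^-1 *: (f (k + h) - f k)) = (fun h => (f (k + h) - f k) / h).
    by apply/funext => h; rewrite /GRing.scale /= mulrC.
  exact: hd.
have [th thin ->] := @MVT_segment R f df 0 1 ler01 (fun x _ => hd' x)
  (derivable_within_continuous (fun x _ => (hd' x).(ex_derive))).
by exists th; [move: thin; rewrite in_itv | rewrite subr0 mulr1].
Qed.

Lemma cvg_eps (V : normedModType R) (q : R -> V) l :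
  q @ 0^' --> l -> forall e, 0 < e -> exists2 d, 0 < d &
    forall k, 0 < `|k| < d -> `|q k - l| < e.
Proof.
move=> /cvgrPdist_lt hq e e0; have := hq e e0.
rewrite near_withinE /= => /nbhs_ballP [d d0 hd]; exists d => // k /andP [k0 kd].
rewrite distrC; apply: hd; last by rewrite -normr_gt0.
by rewrite /ball /= sub0r normrN.
Qed.
End Lim.


Unset Implicit Arguments.

Section NC.
Variables (R : realType) (X : normedModType R) (ip : X -> X -> R).
Hypothesis hip : inner_product ip.

Lemma small3 (d1 d2 d3 : R) : 0 < d1 -> 0 < d2 -> 0 < d3 ->
  exists k, [/\ 0 < k, k < d1, k < d2 & k < d3].
Proof.
move=> h1 h2 h3; exists (Num.min (Num.min d1 d2) d3 / 2).
have m0 : 0 < Num.min (Num.min d1 d2) d3 by rewrite !lt_min h1 h2 h3.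
have m1 : Num.min (Num.min d1 d2) d3 <= Num.min d1 d2 by rewrite ge_min lexx.
have m2 : Num.min (Num.min d1 d2) d3 <= d3 by rewrite ge_min lexx orbT.
have m3 : Num.min d1 d2 <= d1 by rewrite ge_min lexx.
have m4 : Num.min d1 d2 <= d2 by rewrite ge_min lexx orbT.
split; lra.
Qed.

Variables (Gx : X -> R) (n x v : X) (r : R).
Hypothesis hGd : forall y, (fun h => (Gx (x + h *: y) - Gx x) / h) @ 0^' --> ip n y.
Hypothesis hGx : Gx x <= 1.
Hypothesis hr : 0 < r.
Hypothesis hsw : forall z, Gx z <= 1 ->
  0 <= ip (x - z) v + `|v| / (2 * r) * `|x - z| ^+ 2.
Hypothesis hv : v != 0.

Lemma sw_k y k : 0 < k -> Gx (x + k *: y) <= 1 ->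
  k * ip y v <= `|v| / (2 * r) * k ^+ 2 * `|y| ^+ 2.
Proof.
move=> k0 /hsw; rewrite opprD addrA subrr add0r normrN normrZ (ipNl hip) (ipZl hip) gtr0_norm //.
by rewrite exprMn; lra.
Qed.

Lemma quot_lt y e : 0 < e -> exists2 d, 0 < d & forall k, 0 < k < d ->
  Gx (x + k *: y) < Gx x + k * (ip n y + e).
Proof.
move=> e0; have [d d0 hd] := cvg_eps (hGd y) e0; exists d => // k /andP [k0 kd].
have := hd k; rewrite gtr0_norm // k0 kd => /(_ isT); rewrite ltr_norml => /andP [_].
rewrite ltrBlDr ltr_pdivrMr // => h; nra.
Qed.

Lemma NC_eq1 : Gx x = 1.
Proof.
apply/eqP; rewrite eq_le hGx /=; rewrite leNgt; apply/negP => hlt.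
have nv0 : 0 < `|v| by rewrite normr_gt0.
have [d d0 hd] := quot_lt v 1 ltr01.
have nn := normr_ge0 (ip n v).
have p2 : 0 < (1 - Gx x) / (`|ip n v| + 1) by apply: divr_gt0; lra.
have p3 : 0 < r / `|v| by apply: divr_gt0.
have [k [k0 k1 k2 k3]] := @small3 _ _ _ d0 p2 p3.
have : Gx (x + k *: v) < 1.
  have := hd k; rewrite k0 k1 => /(_ isT) h.
  move: k2; rewrite ltr_pdivlMr; last lra.
  have : ip n v <= `|ip n v| by exact: ler_norm.
  nra.
move/ltW/(@sw_k _ _ k0); rewrite (ipxx hip) //.
move: k3; rewrite ltr_pdivlMr // => k3.
set a := `|v| ^+ 2.
have a0 : 0 < a by rewrite /a exprn_gt0.
have -> : `|v| / (2 * r) * k ^+ 2 * a = (k * `|v|) / (2 * r) * k * a.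
  by rewrite /a; ring.
have : (k * `|v|) / (2 * r) < 1.
  by rewrite ltr_pdivrMr; nra.
move=> h1 h2.
have : k * a <= (k * `|v|) / (2 * r) * k * a by [].
have ka : 0 < k * a by rewrite mulr_gt0.
nra.
Qed.

Lemma NC_dir y : ip n y < 0 -> ip y v <= 0.
Proof.
move=> hn; rewrite leNgt; apply/negP => hpos.
have nv0 : 0 < `|v| by rewrite normr_gt0.
have e0 : 0 < - ip n y / 2 by lra.
have [d d0 hd] := quot_lt y _ e0.
set B := `|v| / (2 * r) * (`|y| ^+ 2 + 1).
have B0 : 0 < B by rewrite /B mulr_gt0 ?divr_gt0 ?mulr_gt0 //; lra.
have eB : B = `|v| / (2 * r) * (`|y| ^+ 2 + 1) by [].
clearbody B.
have p2 : 0 < ip y v / B by apply: divr_gt0.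
have [k [k0 k1 k2 _]] := @small3 _ _ _ d0 p2 ltr01.
have : Gx (x + k *: y) <= 1.
  have := hd k; rewrite k0 k1 => /(_ isT) h.
  have hneg : 0 < - (ip n y + - ip n y / 2) by lra.
  have := mulr_gt0 k0 hneg; rewrite mulrN.
  move: h; set kA := k * _ => h hh; apply: ltW; apply: (lt_le_trans h); apply: (le_trans _ hGx); rewrite gerDl -oppr_ge0; exact: ltW.
move/(@sw_k _ _ k0).
move: k2; rewrite ltr_pdivlMr // => k2.
have c0 : 0 <= k * (k * (`|v| / (2 * r))).
  apply: mulr_ge0; [exact: ltW | apply: mulr_ge0; [exact: ltW | apply: divr_ge0 => //; have := hr; lra]].
have e1 : `|v| / (2 * r) * k ^+ 2 * `|y| ^+ 2 <= k * (k * B).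
  rewrite eB -subr_ge0.
  have -> : k * (k * (`|v| / (2 * r) * (`|y| ^+ 2 + 1))) - `|v| / (2 * r) * k ^+ 2 * `|y| ^+ 2
     = k * (k * (`|v| / (2 * r))) by ring.
  exact: c0.
have e2 : k * (k * B) < k * ip y v by rewrite ltr_pM2l.
move: e1 e2; set P := `|v| / (2 * r) * k ^+ 2 * `|y| ^+ 2; set Q := k * (k * B); set S := k * ip y v.
move=> e1 e2 e3; have := le_lt_trans e3 (le_lt_trans e1 e2); by rewrite ltxx.
Qed.

Lemma NC_align : n != 0 -> `|v| * `|n| <= ip n v.
Proof.
move=> n0.
have nv0 : 0 < `|v| by rewrite normr_gt0.
have nn0 : 0 < `|n| by rewrite normr_gt0.
have cs : ip n v <= `|n| * `|v| := ip_le hip n v.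
apply/ler_addgt0Pr => e e0.
set eps := e / (`|n| ^+ 2 * `|v|).
have eps0 : 0 < eps by rewrite divr_gt0 // mulr_gt0 // exprn_gt0.
set y := `|v|^-1 *: v - `|n|^-1 *: n - eps *: n.
have hy : ip n y < 0.
  rewrite /y !(ipBr hip) !(ipZr hip) (ipxx hip) //.
  have : `|v|^-1 * ip n v <= `|n| by rewrite ler_pdivrMl // mulrC.
  have : `|n|^-1 * `|n| ^+ 2 = `|n| by rewrite expr2 mulrA mulVf ?mul1r // gt_eqF.
  have : 0 < eps * `|n| ^+ 2 by rewrite mulr_gt0 // exprn_gt0.
  lra.
have := NC_dir _ hy.
rewrite /y !(ipBl hip) !(ipZl hip) (ipxx hip) //.
have -> : `|v|^-1 * `|v| ^+ 2 = `|v| by rewrite expr2 mulrA mulVf ?mul1r // gt_eqF.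
move=> h.
have h2 : `|v| <= `|n|^-1 * ip n v + eps * ip n v by lra.
have h3 : eps * ip n v <= eps * (`|n| * `|v|) by rewrite ler_pM2l.
have h4 : eps * (`|n| * `|v|) = e / `|n|.
  by rewrite /eps; field; rewrite ?gt_eqF //; apply/andP; split; rewrite gt_eqF.
have h5 : `|v| <= (ip n v + e) / `|n|.
  rewrite mulrDl; move: h4; rewrite -/(e / `|n|) => h4; lra.
by rewrite -ler_pdivlMr.
Qed.
End NC.


Set Implicit Arguments. Unset Strict Implicit.

Section Ell.
Variables (R : realType) (W : normedModType R).

Lemma ell0 (ell : W -> R) : (forall k a b, ell (k *: a + b) = k * ell a + ell b) -> ell 0 = 0.
Proof. by move=> hl; have h := hl 1 0 0; rewrite scale1r addr0 mul1r in h; apply: (addrI (ell 0)); rewrite addr0 -h. Qed.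

Lemma ellB (ell : W -> R) : (forall k a b, ell (k *: a + b) = k * ell a + ell b) ->
  forall a b, ell (a - b) = ell a - ell b.
Proof. by move=> hl a b; rewrite addrC -scaleN1r hl mulN1r addrC. Qed.

Lemma ellZ (ell : W -> R) : (forall k a b, ell (k *: a + b) = k * ell a + ell b) ->
  forall k a, ell (k *: a) = k * ell a.
Proof. by move=> hl k a; rewrite -[k *: a]addr0 hl (ell0 hl) addr0. Qed.

Lemma ell_cvg (ell : W -> R) (K : R) (T : Type) (F : set_system T) {FF : Filter F} (q : T -> W) l :
  (forall k a b, ell (k *: a + b) = k * ell a + ell b) ->
  (forall a, `|ell a| <= K * `|a|) -> 0 <= K ->
  q @ F --> l -> (fun h => ell (q h)) @ F --> ell l.
Proof.
move=> hl hb K0 /cvgrPdist_lt hq; apply/cvgrPdist_lt => e e0.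
have e1 : 0 < e / (K + 1) by apply: divr_gt0 => //; lra.
apply: filterS (hq _ e1) => h hh.
rewrite -(ellB hl); apply: (le_lt_trans (hb _)).
have h1 : (K + 1) * `|l - q h| < e by rewrite -ltr_pdivlMl //; lra.
have := normr_ge0 (l - q h); nra.
Qed.

Lemma ell_mvt (ell : W -> R) (K M : R) (phi D : R -> W) :
  (forall k a b, ell (k *: a + b) = k * ell a + ell b) ->
  (forall a, `|ell a| <= K * `|a|) -> 0 <= K ->
  (forall k, (fun h => h^-1 *: (phi (k + h) - phi k)) @ 0^' --> D k) ->
  (forall k, 0 <= k <= 1 -> `|D k| <= M) ->
  `|ell (phi 1 - phi 0)| <= K * M.
Proof.
move=> hl hb K0 hd hM.
have hq k : (fun h => (ell (phi (k + h)) - ell (phi k)) / h) @ 0^' --> ell (D k).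
  have -> : (fun h => (ell (phi (k + h)) - ell (phi k)) / h) =
            (fun h => ell (h^-1 *: (phi (k + h) - phi k))).
    by apply/funext => h; rewrite (ellZ hl) (ellB hl) mulrC.
  exact: (ell_cvg hl hb K0 (hd k)).
have [th thin] := MVT01 hq.
rewrite (ellB hl) => ->.
apply: (le_trans (hb _)); apply: ler_wpM2l => //; exact: hM.
Qed.
End Ell.

Section GX.
Variables (R : realType) (X : normedModType R) (ip : X -> X -> R).
Hypothesis hip : inner_product ip.

Lemma Gx_lower (Gx : X -> R) (gx : X -> X) (C0 : R) x p :
  (forall x y, (fun h => (Gx (x + h *: y) - Gx x) / h) @ 0^' --> ip (gx x) y) ->
  (forall a b, `|gx a - gx b| <= C0 * `|a - b|) ->
  0 <= C0 ->
  ip (gx x) p - C0 * `|p| ^+ 2 <= Gx (x + p) - Gx x.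
Proof.
move=> hd hL C00.
have hq k : (fun h => (Gx (x + (k + h) *: p) - Gx (x + k *: p)) / h) @ 0^'
   --> ip (gx (x + k *: p)) p.
  have -> : (fun h => (Gx (x + (k + h) *: p) - Gx (x + k *: p)) / h) =
            (fun h => (Gx ((x + k *: p) + h *: p) - Gx (x + k *: p)) / h).
    by apply/funext => h; rewrite scalerDl addrA.
  exact: hd.
have [th /andP [th0 th1]] := MVT01 hq.
rewrite scale1r scale0r addr0 => ->.
have : `|ip (gx (x + th *: p) - gx x) p| <= C0 * `|p| ^+ 2.
  apply: (le_trans (ip_abs hip _ _)).
  have h1 := hL (x + th *: p) x.
  rewrite addrAC subrr add0r normrZ ger0_norm // in h1.
  have h2 : C0 * (th * `|p|) <= C0 * `|p|.
    by apply: ler_wpM2l => //; rewrite ler_piMl.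
  rewrite expr2 mulrA; apply: ler_wpM2r => //; exact: le_trans h1 h2.
rewrite (ipBl hip) ler_norml => /andP [h _].
lra.
Qed.
End GX.



Set Implicit Arguments. Unset Strict Implicit.

Lemma stepB (R : realType) (X W : normedModType R) (ip : X -> X -> R)
  (G : X -> W -> R) (gradx : X -> W -> X) (gradw : X -> W -> W -> R)
  (C0 K1 omega gamma : R) (g : R -> X -> X -> W) (gu gxi : R -> X -> X -> X -> W)
  (u xi : R -> X) (t s : R) :
  inner_product ip ->
  (forall x w y, (fun h : R => (G (x + h *: y) w - G x w) / h) @ 0^' --> ip (gradx x w) y) ->
  (forall x w v, (fun h : R => (G x (w + h *: v) - G x w) / h) @ 0^' --> gradw x w v) ->
  (forall x w (k : R) v v', gradw x w (k *: v + v') = k * gradw x w v + gradw x w v') ->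
  (forall x w v, `|gradw x w v| <= K1 * `|v|) ->
  (forall x x' w w', `|gradx x w - gradx x' w'| <= C0 * (`|x - x'| + `|w - w'|)) ->
  0 <= C0 -> 0 <= K1 ->
  (forall uu z y, (fun h : R => h^-1 *: (g s (uu + h *: y) z - g s uu z)) @ 0^' --> gu s uu z y) ->
  (forall uu z y, (fun h : R => h^-1 *: (g s uu (z + h *: y) - g s uu z)) @ 0^' --> gxi s uu z y) ->
  (forall uu z y, `|gu s uu z y| <= omega * `|y|) ->
  (forall uu z y, `|gxi s uu z y| <= gamma * `|y|) ->
  G (u s - xi s) (g s (u s) (xi s)) <= 1 ->
  G (u t - xi t) (g t (u t) (xi t)) = 1 ->
  ip (gradx (u t - xi t) (g t (u t) (xi t))) ((u s - xi s) - (u t - xi t))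
    - C0 * `|(u s - xi s) - (u t - xi t)| ^+ 2
  <= K1 * (omega * `|u s - u t| + gamma * `|xi s - xi t|
           + `|g s (u t) (xi t) - g t (u t) (xi t)|).
Proof.
move=> hip hGx hGw hlin hK1 hC0 C00 K10 hgu hgxi hbu hbxi hs1 ht1.
set xs := u s - xi s; set xt := u t - xi t.
set ws := g s (u s) (xi s); set wt := g t (u t) (xi t).
have hlow := @Gx_lower R X ip hip (fun y => G y wt) (fun y => gradx y wt) C0 xt (xs - xt)
  (fun x y => hGx x wt y).
have hL : forall a b, `|gradx a wt - gradx b wt| <= C0 * `|a - b|.
  by move=> a b; have := hC0 a b wt wt; rewrite subrr normr0 addr0.
have {hlow} := hlow hL C00; rewrite [xt + _]addrC subrK ht1 => hlow.
set q := ws - wt.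
have hq k : (fun h => (G xs (wt + (k + h) *: q) - G xs (wt + k *: q)) / h) @ 0^'
   --> gradw xs (wt + k *: q) q.
  have -> : (fun h => (G xs (wt + (k + h) *: q) - G xs (wt + k *: q)) / h) =
            (fun h => (G xs ((wt + k *: q) + h *: q) - G xs (wt + k *: q)) / h).
    by apply/funext => h; rewrite scalerDl addrA.
  exact: hGw.
have [th _] := MVT01 hq.
rewrite scale1r scale0r addr0 /q [wt + _]addrC subrK.
set ell := gradw xs (wt + th *: (ws - wt)) => hmvt.
have hl : forall k a b, ell (k *: a + b) = k * ell a + ell b by move=> *; exact: hlin.
have hb : forall a, `|ell a| <= K1 * `|a| by move=> a; exact: hK1.
have eq : ws - wt = (ws - g s (u t) (xi s)) + (g s (u t) (xi s) - g s (u t) (xi t))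
                    + (g s (u t) (xi t) - wt).
  by rewrite !addrA subrK subrK.
have b1 : `|ell (ws - g s (u t) (xi s))| <= K1 * (omega * `|u s - u t|).
  pose phi k := g s (u t + k *: (u s - u t)) (xi s).
  have -> : ws - g s (u t) (xi s) = phi 1 - phi 0.
    by rewrite /phi scale1r scale0r addr0 [u t + _]addrC subrK.
  apply: (ell_mvt hl hb K10 (D := fun k => gu s (u t + k *: (u s - u t)) (xi s) (u s - u t))).
  - move=> k; rewrite /phi.
    have -> : (fun h => h^-1 *: (g s (u t + (k + h) *: (u s - u t)) (xi s) -
                                 g s (u t + k *: (u s - u t)) (xi s))) =
              (fun h => h^-1 *: (g s ((u t + k *: (u s - u t)) + h *: (u s - u t)) (xi s) -
                                 g s (u t + k *: (u s - u t)) (xi s))).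
      by apply/funext => h; rewrite scalerDl addrA.
    exact: hgu.
  - by move=> k _; exact: hbu.
have b2 : `|ell (g s (u t) (xi s) - g s (u t) (xi t))| <= K1 * (gamma * `|xi s - xi t|).
  pose phi k := g s (u t) (xi t + k *: (xi s - xi t)).
  have -> : g s (u t) (xi s) - g s (u t) (xi t) = phi 1 - phi 0.
    by rewrite /phi scale1r scale0r addr0 [xi t + _]addrC subrK.
  apply: (ell_mvt hl hb K10 (D := fun k => gxi s (u t) (xi t + k *: (xi s - xi t)) (xi s - xi t))).
  - move=> k; rewrite /phi.
    have -> : (fun h => h^-1 *: (g s (u t) (xi t + (k + h) *: (xi s - xi t)) -
                                 g s (u t) (xi t + k *: (xi s - xi t)))) =
              (fun h => h^-1 *: (g s (u t) ((xi t + k *: (xi s - xi t)) + h *: (xi s - xi t)) -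
                                 g s (u t) (xi t + k *: (xi s - xi t)))).
      by apply/funext => h; rewrite scalerDl addrA.
    exact: hgxi.
  - by move=> k _; exact: hbxi.
have b3 := hb (g s (u t) (xi t) - wt).
have ellD : forall a b, ell (a + b) = ell a + ell b.
  by move=> a b; rewrite -{1}[a]scale1r hl mul1r.
have : ell (ws - wt) >= - (K1 * (omega * `|u s - u t|) + K1 * (gamma * `|xi s - xi t|)
                          + K1 * `|g s (u t) (xi t) - wt|).
  rewrite eq ellD ellD.
  move: b1 b2 b3; rewrite !ler_norml => /andP [b1 _] /andP [b2 _] /andP [b3 _].
  lra.
move=> hge.
have : G xs wt - 1 <= - ell (ws - wt).
  by move: hmvt hs1; rewrite -/ws; lra.
move: hlow; rewrite -/xs -/xt.
lra.
Qed.


Set Implicit Arguments. Unset Strict Implicit.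

Lemma seq_dnbhs (R : realType) (hs : nat -> R) :
  hs @ \oo --> (0 : R) -> (forall k, hs k != 0) -> hs @ \oo --> (0 : R)^'.
Proof.
move=> h0 hn A hA.
have : \forall k \near \oo, hs k != 0 -> A (hs k) by exact: h0 _ hA.
by apply: filterS => k hk; apply: hk.
Qed.

Lemma stepC (R : realType) (X W : normedModType R) (ip : X -> X -> R)
  (u xi : R -> X) (gg : R -> W) (n u' xi' : X) (gtv : W) (C0 K1 omega gamma t : R)
  (hs : nat -> R) :
  inner_product ip -> 0 <= C0 ->
  (fun h => h^-1 *: (u (t + h) - u t)) @ 0^' --> u' ->
  (fun h => h^-1 *: (xi (t + h) - xi t)) @ 0^' --> xi' ->
  (fun h => h^-1 *: (gg (t + h) - gg t)) @ 0^' --> gtv ->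
  hs @ \oo --> (0 : R) -> (forall k, hs k < 0) ->
  (forall k, ip n ((u (t + hs k) - xi (t + hs k)) - (u t - xi t))
       - C0 * `|(u (t + hs k) - xi (t + hs k)) - (u t - xi t)| ^+ 2
     <= K1 * (omega * `|u (t + hs k) - u t| + gamma * `|xi (t + hs k) - xi t|
              + `|gg (t + hs k) - gg t|)) ->
  - ip n (u' - xi') <= K1 * (omega * `|u'| + gamma * `|xi'| + `|gtv|).
Proof.
move=> hip C00 hu hxi hgg hs0 hsn hin.
have hs0' : hs @ \oo --> (0 : R)^' by apply: seq_dnbhs => // k; rewrite lt_eqF.
pose Du k := (hs k)^-1 *: (u (t + hs k) - u t).
pose Dxi k := (hs k)^-1 *: (xi (t + hs k) - xi t).
pose Dg k := (hs k)^-1 *: (gg (t + hs k) - gg t).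
have cDu : Du @ \oo --> u' := cvg_comp _ _ hs0' hu.
have cDxi : Dxi @ \oo --> xi' := cvg_comp _ _ hs0' hxi.
have cDg : Dg @ \oo --> gtv := cvg_comp _ _ hs0' hgg.
have hlin : forall k a b, ip n (k *: a + b) = k * ip n a + ip n b.
  by move=> k a b; rewrite (ipDr hip) (ipZr hip).
have hbd : forall a, `|ip n a| <= `|n| * `|a| by move=> a; exact: (ip_abs hip n a).
have cD : (fun k => Du k - Dxi k) @ \oo --> u' - xi' by apply: cvgB.
have cL : (fun k => - ip n (Du k - Dxi k)) @ \oo --> - ip n (u' - xi').
  by apply: cvgN; exact: (ell_cvg hlin hbd (normr_ge0 n) cD).
have cR : (fun k => K1 * (omega * `|Du k| + gamma * `|Dxi k| + `|Dg k|)
                    - C0 * hs k * `|Du k - Dxi k| ^+ 2) @ \oo -->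
          K1 * (omega * `|u'| + gamma * `|xi'| + `|gtv|) - C0 * 0 * `|u' - xi'| ^+ 2.
  apply: cvgB; first apply: cvgMr; first apply: cvgD; first apply: cvgD.
  - exact: cvgMr (cvg_norm cDu).
  - exact: cvgMr (cvg_norm cDxi).
  - exact: cvg_norm cDg.
  apply: cvgM; first exact: cvgMr hs0.
  exact: (cvgM (cvg_norm cD) (cvg_norm cD)).
rewrite mulr0 mul0r subr0 in cR.
apply: (ler_cvg_to cL cR); apply: nearW => k.
have hk := hsn k; set h := hs k in hk *.
have h0 : h != 0 by rewrite lt_eqF.
have ea : u (t + h) - u t = h *: Du k by rewrite /Du -/h scalerA mulfV ?scale1r.
have eb : xi (t + h) - xi t = h *: Dxi k by rewrite /Dxi -/h scalerA mulfV ?scale1r.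
have ec : gg (t + h) - gg t = h *: Dg k by rewrite /Dg -/h scalerA mulfV ?scale1r.
clearbody Du Dxi Dg.
have ex : (u (t + h) - xi (t + h)) - (u t - xi t) = h *: (Du k - Dxi k).
  rewrite scalerBr -ea -eb !opprB addrACA [in RHS]addrACA.
  by rewrite [- u t + _]addrC.
have := hin k; rewrite -/h ex ea eb ec !normrZ (ipZr hip) ltr0_norm // exprMn sqrrN.
set P := ip n _; set N := `|Du k - Dxi k|; set A := `|Du k|; set B := `|Dxi k|; set Cc := `|Dg k|.
move=> hh.
have hk2 : 0 < - h by rewrite oppr_gt0.
rewrite -(ler_pM2l hk2).
nra.
Qed.


Set Implicit Arguments. Unset Strict Implicit.

Lemma ae_dense (R : realType) (P : R -> Prop) (T t d : R) :
  (\forall s \ae (@lebesgue_measure R), `]0, T[%classic s -> P s) ->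
  0 < t -> t <= T -> 0 < d -> exists s, [/\ t - d < s, s < t, 0 < s & P s].
Proof.
move=> hae t0 tT d0; apply: contrapT => hno.
set m := Num.max 0 (t - d).
have mt : m < t by rewrite gt_max t0 /=; lra.
have sub : [set` `]m, t[] `<=` ~` [set s | `]0, T[%classic s -> P s].
  move=> s /=; rewrite in_itv /= gt_max => /andP [/andP [s0 sd] st] hP.
  apply: hno; exists s; split => //; apply: hP.
  by rewrite /= in_itv /= s0 /=; lra.
have hae' : (@lebesgue_measure R).-negligible (~` [set s | `]0, T[%classic s -> P s]) := hae.
have [A [mA A0 sA]] := hae'.
have hle := @le_measure _ _ _ (@lebesgue_measure R) [set` `]m, t[] A.
have := hle (mem_set (measurable_itv _)) (mem_set mA) (subset_trans sub sA).
move=> h.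
have : (@lebesgue_measure R [set` `]m, t[] <= 0)%E.
  by apply: (le_trans h); rewrite -A0.
rewrite lebesgue_measure_itv /= lte_fin mt /= -EFinD lee_fin; lra.
Qed.

Lemma good_seq (R : realType) (P : R -> Prop) (T t : R) :
  (\forall s \ae (@lebesgue_measure R), `]0, T[%classic s -> P s) ->
  0 < t -> t <= T ->
  exists hs : nat -> R, [/\ hs @ \oo --> (0 : R), (forall k, hs k < 0),
     (forall k, 0 < t + hs k) & (forall k, P (t + hs k))].
Proof.
move=> hae t0 tT.
have ex k : exists s, [/\ t - k.+1%:R^-1 < s, s < t, 0 < s & P s].
  by apply: (ae_dense hae t0 tT); rewrite invr_gt0.
have [f hf] := choice ex.
exists (fun k => f k - t); split.
- apply/cvgrPdist_lt => e e0.
  have := near_infty_natSinv_lt (PosNum e0); apply: filterS => k /= hk.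
  have [h1 h2 _ _] := hf k.
  rewrite sub0r normrN ltr0_norm ?subr_lt0 //; rewrite opprB; apply: (lt_trans _ hk); move: h1; rewrite !ltrBlDr addrC => -> //.
- by move=> k; have [_ h2 _ _] := hf k; rewrite subr_lt0.
- by move=> k; have [_ _ h3 _] := hf k; rewrite addrC subrK.
- by move=> k; have [_ _ _ h4] := hf k; rewrite addrC subrK.
Qed.


Unset Implicit Arguments.

Lemma final_alg (R : realType) (N c K1 om gam a V U : R) :
  0 < c -> c <= N -> 0 <= K1 -> 0 <= om -> 0 <= gam -> 0 <= a -> 0 <= U -> 0 <= V ->
  K1 * gam / c < 1 ->
  V * N <= N * U + K1 * (om * U + gam * V + a) ->
  V <= (1 - K1 * gam / c)^-1 * ((1 + om * K1 / c) * U + K1 / c * a).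
Proof.
move=> c0 cN K10 om0 gam0 a0 U0 V0 hd h.
have E0 : 0 <= K1 * (om * U + gam * V + a).
  by apply: mulr_ge0 => //; rewrite !addr_ge0 // mulr_ge0.
have E1 : c * (V - U) <= K1 * (om * U + gam * V + a).
  have [VU|VU] := leP U V.
    have : c * (V - U) <= N * (V - U) by apply: ler_wpM2r; lra.
    lra.
  have : c * (V - U) < 0 by rewrite pmulr_rlt0 //; lra.
  lra.
have d0 : 0 < 1 - K1 * gam / c by lra.
rewrite -(ler_pM2l d0) mulrA mulfV ?gt_eqF // mul1r.
rewrite -(ler_pM2l c0).
have -> : c * ((1 - K1 * gam / c) * V) = c * V - K1 * gam * V by field; rewrite gt_eqF.
have -> : c * ((1 + om * K1 / c) * U + K1 / c * a) = c * U + om * K1 * U + K1 * a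
  by field; rewrite gt_eqF.
lra.
Qed.


Unset Implicit Arguments.
Set Strict Implicit.

Theorem lemma4p2
  (R : realType) (X : completeNormedModType R) (ip : X -> X -> R)
  (W : completeNormedModType R) (T : R)
  (G : X -> W -> R) (gradx : X -> W -> X) (gradw : X -> W -> W -> R)
  (lambda c L K0 K1 C0 C1 : R) (mu1 : W -> R -> R) (mu2 : R -> R)
  (g : R -> X -> X -> W) (gt : R -> X -> X -> W)
  (gu gxi : R -> X -> X -> X -> W) (a b : R -> R)
  (gamma omega Cxi Cu : R)
  (u : R -> X) (x0 : X) (xi : R -> X) :
  (* standing data *)
  0 < T -> inner_product ip ->
  (forall x w, 0 <= G x w) -> locally_lipschitz G ->
  (* (H) *)
  (forall x w y, (fun h : R => (G (x + h *: y) w - G x w) / h) @ 0^' --> ip (gradx x w) y) ->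
  0 < lambda -> 0 < c -> 0 < L ->
  (forall w s, 0 <= s -> 0 <= mu1 w s) -> (forall s, 0 <= s -> 0 <= mu2 s) ->
  (forall w, mu1 w 0 = 0) -> mu2 0 = 0 ->
  (forall w, mu1 w s @[s --> +oo] --> +oo) -> mu2 s @[s --> +oo] --> +oo ->
  (forall x w, G x w = 1 -> c <= `|gradx x w|) ->
  (forall w x y, Zset G w x -> Zset G w y ->
     `|gradx x w - gradx y w| <= mu1 w `|x - y|) ->
  (forall w x z, bdry (Zset G w) x -> Zset G w z ->
     - lambda * `|x - z| ^+ 2 <= ip (gradx x w - gradx z w) (x - z)) ->
  (forall x w w', `|G x w - G x w'| <= L * `|w - w'|) ->
  (forall x w rho, 0 < rho -> (rho%:E <= dist x (Zset G w))%E ->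
     mu2 rho <= G x w - 1) ->
  (* (L) *)
  (forall x w v, (fun h : R => (G x (w + h *: v) - G x w) / h) @ 0^' --> gradw x w v) ->
  (forall x w (k : R) v v', gradw x w (k *: v + v') = k * gradw x w v + gradw x w v') ->
  0 < K0 -> 0 < K1 -> 0 < C0 -> 0 < C1 ->
  (forall x w, `|gradx x w| <= K0) ->
  (forall x w v, `|gradw x w v| <= K1 * `|v|) ->
  (forall x x' w w', `|gradx x w - gradx x' w'| <= C0 * (`|x - x'| + `|w - w'|)) ->
  (forall x x' w w' v,
     `|gradw x w v - gradw x' w' v| <= C1 * (`|x - x'| + `|w - w'|) * `|v|) ->
  (* (g) *)
  {within [set p : R * (X * X) | 0 <= p.1 <= T],
     continuous (fun p : R * (X * X) => g p.1 p.2.1 p.2.2)} ->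
  (forall t uu z y, 0 <= t <= T ->
     (fun h : R => h^-1 *: (g t (uu + h *: y) z - g t uu z)) @ 0^' --> gu t uu z y) ->
  (forall t uu z y, 0 <= t <= T ->
     (fun h : R => h^-1 *: (g t uu (z + h *: y) - g t uu z)) @ 0^' --> gxi t uu z y) ->
  (forall t uu z (k : R) y y', 0 <= t <= T ->
     gu t uu z (k *: y + y') = k *: gu t uu z y + gu t uu z y') ->
  (forall t uu z (k : R) y y', 0 <= t <= T ->
     gxi t uu z (k *: y + y') = k *: gxi t uu z y + gxi t uu z y') ->
  (@lebesgue_measure R).-integrable `]0, T[%classic (fun t => (a t)%:E) ->
  (@lebesgue_measure R).-integrable `]0, T[%classic (fun t => (b t)%:E) ->
  0 < gamma -> 0 < omega -> 0 < Cxi -> 0 < Cu ->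
  (\forall t \ae (@lebesgue_measure R), `]0, T[%classic t ->
     forall uu v z eta,
       ((fun h : R => h^-1 *: (g ((t : R) + h) uu z - g t uu z)) @ 0^' --> gt t uu z) /\
       (forall y, `|gxi t uu z y| <= gamma * `|y|) /\
       (forall y, `|gu t uu z y| <= omega * `|y|) /\
       `|gt t uu z| <= a t /\
       (forall y, `|gxi t uu z y - gxi t v eta y|
                    <= Cxi * (`|uu - v| + `|z - eta|) * `|y|) /\
       (forall y, `|gu t uu z y - gu t v eta y|
                    <= Cu * (`|uu - v| + `|z - eta|) * `|y|) /\
       `|gt t uu z - gt t v eta| <= b t * (`|uu - v| + `|z - eta|)) ->
  K1 * gamma / c < 1 ->
  (* the data of the lemma *)
  W11 T u ->
  Zset G (g 0 (u 0) (u 0 - x0)) x0 ->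
  sweeping_solution ip G g (c / lambda) T u x0 xi ->
  \forall t \ae (@lebesgue_measure R), `]0, T[%classic t ->
     `|derive1 xi t| <= (1 - K1 * gamma / c)^-1 *
        ((1 + omega * K1 / c) * `|derive1 u t| + K1 / c * a t).
Proof.
move=> T0 hip hGnn hGll hGx lam0 c0 L0 mu1nn mu2nn mu10 mu20 mu1inf mu2inf hc hmu1
  hiii hiv hv hGw hlinw K00 K10 C00 C10 hK0 hK1 hC0 hC1 gcont hgu hgxi hgulin hgxilin
  aint bint gam0 om0 Cxi0 Cu0 hgae hdelta hWu hZ0 hsol.
case: hsol => hWxi hZ hswae _.
case: hWxi => _ dxi _; case: hWu => _ du _.
have hgae0 := hgae.
have FF := ae_filter_ringOfSetsType (@lebesgue_measure R).
move: hgae dxi du hswae; rewrite /prop_near1 /= => hgae dxi du hswae.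
apply: (filter_app _ _ hgae); apply: (filter_app _ _ dxi); apply: (filter_app _ _ du).
apply: (filter_app _ _ hswae); apply: filterE => t hsw du1 dxi1 hg tin.
have [t0 tT] : 0 < t /\ t < T by move: tin; rewrite in_itv /= => /andP [].
have [hgtlim [_ [_ [hgta _]]]] := hg tin (u t) (u t) (xi t) (xi t).
have a0 : 0 <= a t := le_trans (normr_ge0 _) hgta.
have dpos : 0 < 1 - K1 * gamma / c by lra.
have cK : 0 <= K1 / c by apply: divr_ge0; lra.
have oK : 0 <= omega * K1 / c by apply: divr_ge0; [apply: mulr_ge0|]; lra.
set v := xi^`()%classic t; set u' := u^`()%classic t.
have [v0|vn0] := eqVneq v 0.
  rewrite v0 normr0; apply: mulr_ge0; first by rewrite invr_ge0 ltW.
  apply: addr_ge0; apply: mulr_ge0 => //; lra.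
set x := u t - xi t; set w := g t (u t) (xi t); set n := gradx x w.
have hZt : G x w <= 1.
  by have := hZ t; rewrite /Zset /=; apply; rewrite !ltW.
have hr : 0 < c / lambda by apply: divr_gt0.
have hsw' : forall z, G z w <= 1 ->
    0 <= ip (x - z) v + `|v| / (2 * (c / lambda)) * `|x - z| ^+ 2.
  by move=> z hz; apply: hsw.
have eq1 := @NC_eq1 R X ip hip (fun y => G y w) n x v (c / lambda)
  (fun y => hGx x w y) hZt hr hsw' vn0.
have cn : c <= `|n| := hc _ _ eq1.
have n0 : n != 0 by rewrite -normr_gt0; lra.
have align := @NC_align R X ip hip (fun y => G y w) n x v (c / lambda)
  (fun y => hGx x w y) hZt hr hsw' vn0 n0.
have [hs [hs0 hsn hspos hsP]] := good_seq hgae0 t0 (ltW tT).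
have key : - ip n (u' - v) <= K1 * (omega * `|u'| + gamma * `|v| + `|gt t (u t) (xi t)|).
  apply: (@stepC R X W ip u xi (fun s => g s (u t) (xi t)) n u' v (gt t (u t) (xi t))
     C0 K1 omega gamma t hs hip (ltW C00) (derivable_quot (du1 tin))
     (derivable_quot (dxi1 tin)) hgtlim hs0 hsn) => k.
  have sT : 0 <= t + hs k <= T.
    by rewrite ltW ?hspos //=; have := hsn k; lra.
  have hP := hsP k.
  apply: (stepB hip hGx hGw hlinw hK1 hC0 (ltW C00) (ltW K10)).
  - by move=> uu z y; apply: hgu.
  - by move=> uu z y; apply: hgxi.
  - by move=> uu z y; have [_ [_ [h _]]] := hP uu uu z z; apply: h.
  - by move=> uu z y; have [_ [h _]] := hP uu uu z z; apply: h.
  - by have := hZ _ sT; rewrite /Zset.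
  - exact: eq1.
apply: (@final_alg R _ _ _ _ _ _ _ _ c0 cn (ltW K10) (ltW om0) (ltW gam0) a0 (normr_ge0 _) (normr_ge0 _) hdelta).
have e1 : ip n u' <= `|n| * `|u'| := ip_le hip n u'.
have e2 : `|gt t (u t) (xi t)| <= a t := hgta.
move: key; rewrite (ipBr hip) => key.
have : K1 * `|gt t (u t) (xi t)| <= K1 * a t by apply: ler_wpM2l => //; exact: ltW.
lra.
Qed.
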